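(* Let $n \geq 2$ be a power of 2. Then $\mathsf{QNAADT}(\mathsf{ADDR}_n) = \Theta(n)$.
   Context: $\mathsf{ADDR}_n:\{0,1\}^{\log n+n}\to\{0,1\}$ is $\mathsf{ADDR}_n(x,y)=y_{\mathsf{bin}(x)}$ for $x\in\{0,1\}^{\log n}$, $y\in\{0,1\}^n$, where $\mathsf{bin}(x)\in[n]$ is the integer whose binary representation is $x$. $\mathsf{AND}_S(z)=\prod_{i\in S}z_i$. A quantum non-adaptive AND decision tree of cost $c$ for a function on $m$ bits works on $|S_1,\dots,S_c\rangle|b\rangle|w\rangle$ with $S_j\subseteq[m]$, $b\in\{0,1\}^c$, arbitrary workspace; it starts from an input-independent state $|\psi\rangle$, applies once the oracle $O_z$ mapping $|S_1,\dots,S_c\rangle|b_1,\dots,b_c\rangle|w\rangle$ to $|S_1,\dots,S_c\rangle|b_1\oplus\mathsf{AND}_{S_1}(z),\dots,b_c\oplus\mathsf{AND}_{S_c}(z)\rangle|w\rangle$, and accepts with probability $\|\Pi O_z|\psi\rangle\|^2$ for a fixed projector $\Pi$; $\mathsf{QNAADT}(f)$ is the minimum cost of one computing $f$ with success probability at least $2/3$ on every input. *)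

(* Defs.v *)
From HB Require Import structures.
From mathcomp Require Import all_boot all_order all_algebra.
From mathcomp Require Import reals.
From mathcomp Require Import complex.

Set Implicit Arguments.
Unset Strict Implicit.
Unset Printing Implicit Defensive.

Import Order.TTheory GRing.Theory Num.Theory.
Local Open Scope ring_scope.

Definition ANDS (m : nat) (S : {set 'I_m}) (z : 'I_m -> bool) : bool :=
  [forall i in S, z i].

(* bin(x): the integer whose binary representation is x = x_0 ... x_{k-1}
   (x_0 most significant bit). *)
Definition bin (k : nat) (x : 'I_k -> bool) : nat :=
  (\sum_(i < k) (x i : nat) * 2 ^ (k.-1 - i))%N.

(* ADDR_n with n = 2^k on (k + n) bits: first k bits are the address x,
   the remaining n bits are y = y_0 ... y_{n-1};  ADDR_n(x,y) = y_{bin(x)}. *)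
Definition ADDR (k : nat) (z : 'I_(k + 2 ^ k) -> bool) : bool :=
  let x := fun i : 'I_k => z (lshift (2 ^ k) i) in
  let y := fun j : 'I_(2 ^ k) => z (rshift k j) in
  [exists j : 'I_(2 ^ k), (val j == bin x) && y j].

(* The Hilbert space has orthonormal basis |S_1..S_c>|b_1..b_c>|w>,    *)
(* with S_j subsets of [m], b in {0,1}^c and w in a finite workspace W.*)

Definition qbasis (m c : nat) (W : finType) : finType :=
  ({ffun 'I_c -> {set 'I_m}} * {ffun 'I_c -> bool} * W)%type.

Section Quantum.
Variables (R : realType) (m c : nat) (W : finType).
Local Notation C := (R[i]).
Local Notation B := (qbasis m c W).

Definition qstate := B -> C.

Definition sqnorm (v : qstate) : C := \sum_(x : B) `|v x| ^+ 2.

Definition unit_state (v : qstate) : Prop := sqnorm v = 1.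

(* The oracle O_z : |S>|b>|w> |-> |S>|b xor (AND_{S_j}(z))_j>|w>.
   It is a permutation of the basis (an involution), so
   (O_z v)(S,b,w) = v(S, b xor AND_S(z), w). *)
Definition oracle_basis (z : 'I_m -> bool) (x : B) : B :=
  let: (Ss, b, w) := x in (Ss, [ffun j => b j (+) ANDS (Ss j) z], w).

Definition oracle (z : 'I_m -> bool) (v : qstate) : qstate :=
  fun x => v (oracle_basis z x).

Definition qop := B -> B -> C.

Definition apply_op (P : qop) (v : qstate) : qstate :=
  fun x => \sum_(y : B) P x y * v y.

Definition is_projector (P : qop) : Prop :=
  (forall x y, P x y = (P y x)^*) /\
  (forall x z, \sum_(y : B) P x y * P y z = P x z).

Definition accept_prob (P : qop) (psi : qstate) (z : 'I_m -> bool) : C :=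
  sqnorm (apply_op P (oracle z psi)).

End Quantum.

Definition qnaadt_computes (R : realType) (m c : nat) (W : finType)
    (psi : qstate R m c W) (P : qop R m c W) (f : ('I_m -> bool) -> bool)
    : Prop :=
  unit_state psi /\ is_projector P /\
  forall z : 'I_m -> bool,
    if f z then 2%:R / 3%:R <= accept_prob P psi z
    else accept_prob P psi z <= 1 / 3%:R.

Definition qnaadt_cost (R : realType) (m : nat) (f : ('I_m -> bool) -> bool)
    (c : nat) : Prop :=
  exists (W : finType) (psi : qstate R m c W) (P : qop R m c W),
    qnaadt_computes psi P f.

(* Main.v *)
Require Import Defs.
From HB Require Import structures.
From mathcomp Require Import all_boot all_order all_algebra.
From mathcomp Require Import reals.
From mathcomp Require Import complex.
From mathcomp Require Import ring zify.
Import Order.TTheory GRing.Theory Num.Theory.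
Local Open Scope ring_scope.

Section Q.
Variables (R : realType) (m c : nat) (W : finType).
Local Notation C := (R[i]).
Local Notation B := (qbasis m c W).

Lemma sqnormE (v : qstate R m c W) : sqnorm v = \sum_x v x * (v x)^*.
Proof. by apply: eq_bigr => x _; rewrite normCK. Qed.

Lemma sqnorm_ge0 (v : qstate R m c W) : 0 <= sqnorm v.
Proof. rewrite sqnormE; apply: sumr_ge0 => x _; exact: mul_conjC_ge0. Qed.

Lemma proj_contract (P : qop R m c W) (w : qstate R m c W) :
  is_projector P -> sqnorm (apply_op P w) <= sqnorm w.
Proof.
move=> [Hh Hi].
set Pw := apply_op P w.
pose K := \sum_(y : B) \sum_(z : B) w y * (w z)^* * P z y.
have E1 : \sum_x Pw x * (Pw x)^* = K.
  rewrite /K /Pw /apply_op.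
  under eq_bigr => x _ do rewrite rmorph_sum mulr_suml.
  under eq_bigr => x _ do under eq_bigr => y _ do rewrite mulr_sumr.
  rewrite exchange_big /=; apply: eq_bigr => y _.
  rewrite exchange_big /=; apply: eq_bigr => z _.
  rewrite -(Hi z y) mulr_sumr; apply: eq_bigr => x _.
  rewrite rmorphM /= -Hh; ring.
have E2 : \sum_x Pw x * (w x)^* = K.
  rewrite /K /Pw /apply_op.
  under eq_bigr => x _ do rewrite mulr_suml.
  rewrite exchange_big /=; apply: eq_bigr => y _.
  apply: eq_bigr => x _; ring.
have E3 : \sum_x w x * (Pw x)^* = K.
  rewrite /K /Pw /apply_op.
  under eq_bigr => x _ do rewrite rmorph_sum mulr_sumr.
  apply: eq_bigr => x _; apply: eq_bigr => y _.
  rewrite rmorphM /= -Hh; ring.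
have E : sqnorm w = sqnorm Pw + sqnorm (fun x => w x - Pw x).
  rewrite !sqnormE.
  under [X in _ = _ + X]eq_bigr => x _ do
    rewrite rmorphB /= mulrBl !mulrBr.
  rewrite !sumrB E1 E2 E3 -E1; ring.
by rewrite E lerDl sqnorm_ge0.
Qed.


Definition touched (z z' : 'I_m -> bool) (b : B) : bool :=
  [exists j, ANDS (b.1.1 j) z != ANDS (b.1.1 j) z'].

Lemma oracle_basisK z : involutive (@oracle_basis m c W z).
Proof.
move=> [[Ss b] w] /=; congr (_, _, _); apply/ffunP => j.
by rewrite !ffunE addbK.
Qed.

Lemma touched_oracle z z' z'' b : touched z z' (oracle_basis z'' b) = touched z z' b.
Proof. by case: b => [[Ss b] w]. Qed.

Lemma untouched z z' b : ~~ touched z z' b -> oracle_basis z b = oracle_basis z' b.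
Proof.
case: b => [[Ss b] w] /= H; congr (_, _, _); apply/ffunP => j; rewrite !ffunE.
move: H; rewrite negb_exists => /forallP /(_ j) /=; rewrite negbK => /eqP ->.
done.
Qed.

Lemma sq_diff_le (a b : C) : `|a - b| ^+ 2 <= 2%:R * `|a| ^+ 2 + 2%:R * `|b| ^+ 2.
Proof.
have -> : 2%:R * `|a| ^+ 2 + 2%:R * `|b| ^+ 2 = `|a - b| ^+ 2 + `|a + b| ^+ 2.
  rewrite !normCK rmorphB rmorphD /=; ring.
by rewrite lerDl normCK mul_conjC_ge0.
Qed.

Lemma sq_sum_le (a b : C) : 4%:R * `|a + b| ^+ 2 <= 5%:R * `|a| ^+ 2 + 20%:R * `|b| ^+ 2.
Proof.
have -> : 5%:R * `|a| ^+ 2 + 20%:R * `|b| ^+ 2 = 4%:R * `|a + b| ^+ 2 + `|a - 4%:R * b| ^+ 2.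
  rewrite !normCK rmorphB rmorphD rmorphM /= conjC_nat; ring.
by rewrite lerDl normCK mul_conjC_ge0.
Qed.

Lemma hybrid z z' (psi : qstate R m c W) :
  sqnorm (fun b => oracle z psi b - oracle z' psi b) <=
  4%:R * \sum_(b | touched z z' b) `|psi b| ^+ 2.
Proof.
rewrite /sqnorm (bigID (touched z z')) /=.
rewrite [X in _ + X]big1 ?addr0; last first.
  by move=> b /untouched; rewrite /oracle => ->; rewrite subrr normr0 expr2 mulr0.
have R1 : forall z0, \sum_(b | touched z z' b) `|psi (oracle_basis z0 b)| ^+ 2 =
                   \sum_(b | touched z z' b) `|psi b| ^+ 2.
  move=> z0; rewrite [RHS](reindex_inj (inv_inj (oracle_basisK z0))) /=.
  by apply: eq_bigl => b; rewrite touched_oracle.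
apply: le_trans (_ : \sum_(b | touched z z' b)
    (2%:R * `|psi (oracle_basis z b)| ^+ 2 + 2%:R * `|psi (oracle_basis z' b)| ^+ 2) <= _).
  by apply: ler_sum => b _; apply: sq_diff_le.
rewrite big_split /= -!mulr_sumr !R1 -mulrDl -natrD; exact: lexx.
Qed.

Lemma apply_opD (P : qop R m c W) (u v : qstate R m c W) x :
  apply_op P u x = apply_op P v x + apply_op P (fun y => u y - v y) x.
Proof.
rewrite /apply_op -big_split /=; apply: eq_bigr => y _; ring.
Qed.

Lemma accept_gap (P : qop R m c W) (psi : qstate R m c W) z1 z0 :
  is_projector P ->
  2%:R / 3%:R <= accept_prob P psi z1 -> accept_prob P psi z0 <= 1 / 3%:R ->
  1 <= 80%:R * \sum_(b | touched z1 z0 b) `|psi b| ^+ 2.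
Proof.
move=> HP h1 h0.
set u := oracle z1 psi; set v := oracle z0 psi.
set d := (fun y => u y - v y).
have H3 : 4%:R * accept_prob P psi z1 <=
   5%:R * accept_prob P psi z0 + 20%:R * sqnorm (apply_op P d).
  rewrite /accept_prob /sqnorm mulr_sumr !mulr_sumr -big_split /=.
  apply: ler_sum => x _; rewrite (apply_opD P u v); exact: sq_sum_le.
have H4 := proj_contract P d HP.
have H5 := hybrid z1 z0 psi.
set Q := \sum_(b | _) _ in H5 *.
set A := accept_prob P psi z1 in h1 H3; set A0 := accept_prob P psi z0 in h0 H3.
set D1 := sqnorm (apply_op P d) in H3 H4.
set D := sqnorm d in H4 H5.
have e1 : 1 = 4%:R * (2%:R / 3%:R) - 5%:R * (1 / 3%:R) :> C.
  apply/eqP; rewrite -subr_eq0; apply/eqP; by field.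
rewrite [leLHS]e1.
apply: le_trans (_ : 4%:R * A - 5%:R * A0 <= _).
  apply: lerB; [by rewrite ler_pM2l ?ltr0n | by rewrite ler_pM2l ?ltr0n].
rewrite lerBlDl.
apply: (le_trans H3); rewrite lerD2l.
have -> : 80%:R * Q = 20%:R * (4%:R * Q) :> C by rewrite mulrA -natrM.
rewrite ler_pM2l ?ltr0n //.
exact: le_trans H4 H5.
Qed.

End Q.
Arguments touched {m c W}.
Arguments accept_gap {R m c W P psi z1 z0}.
Set Implicit Arguments.
Unset Strict Implicit.
Unset Printing Implicit Defensive.

Lemma binS k (x : 'I_k.+1 -> bool) :
  bin x = (x ord0 * 2 ^ k + bin (fun i : 'I_k => x (lift ord0 i)))%N.
Proof.
rewrite /bin big_ord_recl /= subn0; congr (_ + _)%N.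
apply: eq_bigr => i _; congr (_ * 2 ^ _)%N; rewrite /bump /=; lia.
Qed.

Lemma bin_lt k (x : 'I_k -> bool) : (bin x < 2 ^ k)%N.
Proof.
elim: k x => [|k IH] x; first by rewrite /bin big_ord0.
rewrite binS expnS; have := IH (fun i : 'I_k => x (lift ord0 i)).
case: (x ord0) => /=; lia.
Qed.

Lemma bin_inj k (x y : 'I_k -> bool) : bin x = bin y -> forall i, x i = y i.
Proof.
elim: k x y => [|k IH] x y; first by move=> _ [].
rewrite !binS => H.
have := bin_lt (fun i : 'I_k => x (lift ord0 i)).
have := bin_lt (fun i : 'I_k => y (lift ord0 i)).
have Hp : (0 < 2 ^ k)%N by rewrite expn_gt0.
move: H; case Ex: (x ord0); case Ey: (y ord0) => /= H h1 h2; try lia.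
- move=> i; case: (unliftP ord0 i) => [j ->|->]; last by rewrite Ex Ey.
  by apply: (IH (fun i => x (lift ord0 i)) (fun i => y (lift ord0 i))); lia.
- move=> i; case: (unliftP ord0 i) => [j ->|->]; last by rewrite Ex Ey.
  by apply: (IH (fun i => x (lift ord0 i)) (fun i => y (lift ord0 i))); lia.
Qed.

Section Addr.
Variable k : nat.
Local Notation m := (k + 2 ^ k)%N.

Definition zin (x : 'I_k -> bool) (yb : 'I_(2 ^ k) -> bool) : 'I_m -> bool :=
  fun i => match split i with inl a => x a | inr j => yb j end.
Definition z1 (x : {ffun 'I_k -> bool}) := zin x (fun j => val j == bin x).
Definition z0 (x : {ffun 'I_k -> bool}) := zin x (fun _ => false).

Lemma split_l (a : 'I_k) : split (lshift (2 ^ k) a) = inl a.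
Proof. exact: (unsplitK (inl a)). Qed.
Lemma split_r (j : 'I_(2 ^ k)) : split (rshift k j) = inr j.
Proof. exact: (unsplitK (inr j)). Qed.

Lemma ADDR_z1 x : ADDR (z1 x).
Proof.
apply/existsP; exists (Ordinal (bin_lt x)).
rewrite /z1 /zin split_r /= eqxx /=.
rewrite andbT; apply/eqP; rewrite /bin; apply: eq_bigr => i _.
by rewrite split_l.
Qed.

Lemma ADDR_z0 x : ADDR (z0 x) = false.
Proof.
apply/existsP => -[j]; by rewrite /z0 /zin split_r andbF.
Qed.

Lemma D_spec x (S : {set 'I_m}) : ANDS S (z1 x) != ANDS S (z0 x) ->
  ANDS S (z1 x) /\ exists2 j : 'I_(2 ^ k), rshift k j \in S & val j = bin x.
Proof.
rewrite /ANDS.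
have mono : [forall i in S, z0 x i] -> [forall i in S, z1 x i].
  move=> /forall_inP H; apply/forall_inP => i /H; rewrite /z0 /z1 /zin.
  by case: (split i).
case E1: [forall i in S, z1 x i]; case E0: [forall i in S, z0 x i] => //= _;
  first (split=> //); last by move: (mono E0); rewrite E1.
move: E0 => /negbT; rewrite negb_forall_in => /exists_inP [i iS Hi].
move: E1 => /forall_inP /(_ i iS).
move: Hi; rewrite /z0 /z1 /zin; case E: (split i) => [a|j] /=; first by move=> /negP.
move=> _ /eqP Hj.
by exists j => //; rewrite -[rshift k j]/(unsplit (inr j)) -E splitK.
Qed.

Lemma D_uniq x x' (S : {set 'I_m}) :
  ANDS S (z1 x) != ANDS S (z0 x) -> ANDS S (z1 x') != ANDS S (z0 x') -> x = x'.
Proof.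
move=> /D_spec [_ [j jS Hj]] /D_spec [H' _].
move: H' => /forall_inP /(_ _ jS); rewrite /z1 /zin split_r => /eqP Hj'.
apply/ffunP => i; apply: (bin_inj (x := x) (y := x')); lia.
Qed.

Lemma count_touch c (Ss : {ffun 'I_c -> {set 'I_m}}) :
  (\sum_(x : {ffun 'I_k -> bool})
     [exists j, ANDS (Ss j) (z1 x) != ANDS (Ss j) (z0 x)] <= c)%N.
Proof.
apply: leq_trans (_ : \sum_x \sum_(j < c) (ANDS (Ss j) (z1 x) != ANDS (Ss j) (z0 x)) <= c)%N.
  apply: leq_sum => x _; case: existsP => [[j Hj]|] //.
  by rewrite (bigD1 j) //= Hj.
rewrite exchange_big /=.
rewrite -[X in (_ <= X)%N]card_ord -sum1_card.
apply: leq_sum => j _.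
case: (boolP [exists x, ANDS (Ss j) (z1 x) != ANDS (Ss j) (z0 x)]).
  move=> /existsP [x0 H0]; rewrite (bigD1 x0) //= H0 big1 // => x Hx.
  by apply/eqP; rewrite eqb0; apply/negP => Hx'; move: Hx; rewrite (D_uniq Hx' H0) eqxx.
rewrite negb_exists => /forallP H; rewrite big1 // => x _.
by apply/eqP; rewrite eqb0; exact: H.
Qed.

End Addr.

Lemma lower (R : realType) k c (W : finType) (psi : qstate R (k + 2 ^ k) c W) P :
  qnaadt_computes psi P (@ADDR k) -> (2 ^ k <= 80 * c)%N.
Proof.
move=> [Hu [HP Hc]].
pose q x := \sum_(b | touched (z1 x) (z0 x) b) `|psi b| ^+ 2.
have key x : 1 <= 80%:R * q x.
  apply: (accept_gap HP).
    by have := Hc (z1 x); rewrite ADDR_z1.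
  by have := Hc (z0 x); rewrite ADDR_z0.
have sumq : \sum_x q x <= c%:R.
  rewrite /q.
  under eq_bigr => x _ do rewrite big_mkcond /=.
  rewrite exchange_big /=.
  apply: le_trans (_ : \sum_b c%:R * `|psi b| ^+ 2 <= _); last first.
    by rewrite -mulr_sumr; move: Hu; rewrite /unit_state /sqnorm => ->; rewrite mulr1.
  apply: ler_sum => b _.
  apply: le_trans (_ : (\sum_(x : {ffun 'I_k -> bool}) (touched (z1 x) (z0 x) b : nat))%:R * `|psi b| ^+ 2 <= _).
    rewrite natr_sum mulr_suml; apply: ler_sum => x _.
    by case: (touched _ _ _); rewrite /= ?mul1r ?mul0r.
  rewrite ler_wpM2r ?exprn_ge0 ?normr_ge0 // ler_nat.
  exact: (count_touch (b.1.1)).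
have : (2 ^ k)%:R <= (80 * c)%:R :> R[i].
  have -> : (2 ^ k)%:R = \sum_(x : {ffun 'I_k -> bool}) (1 : R[i]).
    by rewrite sumr_const card_ffun card_bool card_ord.
  apply: le_trans (_ : \sum_(x : {ffun 'I_k -> bool}) 80%:R * q x <= _).
    by apply: ler_sum => x _; exact: key.
  by rewrite -mulr_sumr natrM ler_pM2l ?ltr0n.
by rewrite ler_nat.
Qed.

Section Upper.
Variables (R : realType) (k : nat).
Local Notation m := (k + 2 ^ k)%N.
Local Notation B := (qbasis m m unit).

Definition b0 : B := ([ffun j => [set j]], [ffun => false], tt).
Definition psi0 : qstate R m m unit := fun b => (b == b0)%:R.
Definition gB (b : B) : bool := ADDR (fun i => b.1.2 i).
Definition P0 : qop R m m unit := fun x y => ((x == y) && gB x)%:R.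

Lemma sqnorm_ind (b1 : B) (t : bool) :
  sqnorm (fun b : B => (t && (b == b1))%:R : R[i]) = t%:R.
Proof.
rewrite /sqnorm (bigD1 b1) //= big1 ?addr0.
  case: t; rewrite /= ?eqxx ?normr1 ?normr0 ?expr1n ?expr0n //.
by move=> b /negbTE ->; rewrite andbF normr0 expr0n.
Qed.

Lemma psi0_unit : unit_state psi0.
Proof. exact: (sqnorm_ind b0 true). Qed.

Lemma P0_proj : is_projector P0.
Proof.
split.
  move=> x y; rewrite /P0 conjC_nat; case: (eqVneq x y) => [->|/negbTE H] //.
move=> x z; rewrite /P0 (bigD1 x) //= big1 ?addr0.
  by rewrite eqxx -natrM; case: (gB x); case: (x == z).
by move=> y /negbTE; rewrite eq_sym => ->; rewrite mul0r.
Qed.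

Lemma ANDS1 (z : 'I_m -> bool) j : ANDS [set j] z = z j.
Proof.
apply/forall_inP/idP => [H|zj i /set1P -> //]; exact: H (set11 j).
Qed.

Lemma ADDR_ext (z z' : 'I_m -> bool) : z =1 z' -> ADDR z = ADDR z'.
Proof.
move=> H; rewrite /ADDR; apply: eq_existsb => j; rewrite H.
congr ((_ == _) && _); rewrite /bin; apply: eq_bigr => i _; by rewrite H.
Qed.

Lemma accept0 z : accept_prob P0 psi0 z = (ADDR z)%:R.
Proof.
set bz := oracle_basis z b0.
have E : forall b, apply_op P0 (oracle z psi0) b = ((gB bz) && (b == bz))%:R.
  move=> b; rewrite /apply_op (bigD1 b) //= big1 ?addr0.
    rewrite /P0 eqxx /= /oracle /psi0.
    have -> : (oracle_basis z b == b0) = (b == bz).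
      by rewrite -(inj_eq (inv_inj (@oracle_basisK m m unit z))) (@oracle_basisK m m unit z).
    case: (eqVneq b bz) => [->|_]; rewrite ?andbT ?andbF ?mulr0 //.
    by case: (gB bz); rewrite ?mul1r ?mul0r.
  by move=> y Hy; rewrite /P0 eq_sym (negbTE Hy) mul0r.
rewrite /accept_prob.
have -> : sqnorm (apply_op P0 (oracle z psi0)) = sqnorm (fun b : B => ((gB bz) && (b == bz))%:R : R[i]).
  by apply: eq_bigr => b _; rewrite E.
rewrite sqnorm_ind.
congr (_%:R); rewrite /gB /bz /b0 /=. congr (nat_of_bool _); apply: ADDR_ext => i /=.
by rewrite !ffunE ANDS1.
Qed.

Lemma upper : qnaadt_cost R (@ADDR k) m.
Proof.
exists unit, psi0, P0; split; first exact: psi0_unit.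
split; first exact: P0_proj.
move=> z; rewrite accept0; case: (ADDR z).
  by rewrite ler_pdivrMr ?ltr0n // mul1r ler_nat.
by rewrite divr_ge0 ?ler0n.
Qed.

End Upper.

Theorem claimA2 (R : realType) :
  exists (a b : R), 0 < a /\ 0 < b /\
    forall k : nat, (1 <= k)%N ->
      (exists c : nat, c%:R <= b * (2 ^ k)%:R /\ qnaadt_cost R (@ADDR k) c) /\
      (forall c : nat, qnaadt_cost R (@ADDR k) c -> a * (2 ^ k)%:R <= c%:R).
Proof.
exists (80%:R^-1), 2%:R; split; first by rewrite invr_gt0 ltr0n.
split; first by rewrite ltr0n.
move=> k _; split.
  exists (k + 2 ^ k)%N; split; last exact: upper.
  rewrite -natrM ler_nat mul2n -addnn leq_add2r.
  exact: ltnW (ltn_expl k (ltnSn 1)).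
move=> c [W [psi [P H]]].
have := lower H; rewrite -(ler_nat R) natrM => Hl.
by rewrite mulrC ler_pdivrMr ?ltr0n // mulrC.
Qed.
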